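(* The identities (A8) $x\wedge(y\wedge z)\approx (z\wedge x)\wedge y$, (J5') $x\approx (x'\wedge y)'\wedge(x'\wedge y')'$ form a 2-base for the variety $\mathbb{BA}$ of Boolean algebras (in the language $\langle\wedge,{}'\rangle$).
   Context: Algebras are of type $\langle \wedge, {}'\rangle$ with $\wedge$ binary and ${}'$ unary. The variety $\mathbb{BA}$ of Boolean algebras in this language consists of the algebras $\langle B,\wedge,{}'\rangle$ obtained from Boolean algebras by keeping only meet and complement (equivalently, the variety generated by the two-element Boolean algebra with meet and complement). A base for a variety is an independent set of identities (no identity in the set follows from the others) that defines the variety; an $n$-base is a base with exactly $n$ identities. *)

(* Defs.v *)
From Stdlib Require Import List Bool Arith.
Import ListNotations.

Inductive term : Type :=
| Var : nat -> term
| Meet : term -> term -> term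
| Comp : term -> term.

Record algebra : Type := Algebra {
  carrier : Type;
  ameet : carrier -> carrier -> carrier;
  acomp : carrier -> carrier }.

Fixpoint eval (A : algebra) (v : nat -> carrier A) (t : term) : carrier A :=
  match t with
  | Var n => v n
  | Meet s u => ameet A (eval A v s) (eval A v u)
  | Comp s => acomp A (eval A v s)
  end.

Definition identity : Type := (term * term)%type.

Definition satisfies (A : algebra) (e : identity) : Prop :=
  forall v : nat -> carrier A, eval A v (fst e) = eval A v (snd e).

Definition two : algebra := Algebra bool andb negb.

(* The variety BA generated by the two-element Boolean algebra
   = the class of algebras satisfying every identity valid in it. *)
Definition in_BA (A : algebra) : Prop :=
  forall e : identity, satisfies two e -> satisfies A e.

Definition defines (E : list identity) (V : algebra -> Prop) : Prop :=
  forall A : algebra, (forall e, In e E -> satisfies A e) <-> V A.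

Definition triv_id : identity := (Var 0, Var 0).

Definition independent (E : list identity) : Prop :=
  forall i, i < length E ->
    ~ (forall A : algebra,
         (forall j, j < length E -> j <> i -> satisfies A (nth j E triv_id)) ->
         satisfies A (nth i E triv_id)).

Definition is_base (E : list identity) (V : algebra -> Prop) : Prop :=
  defines E V /\ independent E.

Definition vx := Var 0.
Definition vy := Var 1.
Definition vz := Var 2.

Definition A8 : identity := (Meet vx (Meet vy vz), Meet (Meet vz vx) vy).

Definition J5' : identity :=
  (vx, Meet (Comp (Meet (Comp vx) vy)) (Comp (Meet (Comp vx) (Comp vy)))).

(* Main.v *)
Require Import Defs.
From Stdlib Require Import List Bool Arith Lia.
Import ListNotations.

Section Deriv.
Variable X : Type.
Variable m : X -> X -> X.
Variable c : X -> X.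
Hypothesis H8 : forall x y z, m x (m y z) = m (m z x) y.
Hypothesis HJ : forall x y, x = m (c (m (c x) y)) (c (m (c x) (c y))).

Lemma comm5 a b cc d e : m a (m b (m cc (m d e))) = m (m b (m cc (m d e))) a.
Proof.
pose proof (H8 a b (m cc (m d e))).
pose proof (H8 cc d e).
pose proof (H8 d a (m e cc)).
pose proof (H8 (m a (m e cc)) b d).
pose proof (H8 (m e cc) (m b d) a).
pose proof (H8 cc (m (m b d) a) e).
pose proof (H8 a e (m b d)).
pose proof (H8 cc a (m e (m b d))).
pose proof (H8 e b d).
pose proof (H8 b cc (m d e)).
congruence.
Qed.

Definition FF t := c (m (c t) t).
Definition GG t := c (m (c t) (c t)).
Lemma splitJ t : t = m (FF t) (GG t).
Proof. exact (HJ t t). Qed.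

Lemma comm x y : m x y = m y x.
Proof.
rewrite (splitJ y), (splitJ (GG y)), (splitJ (GG (GG y))).
apply comm5.
Qed.

Lemma assoc x y z : m (m x y) z = m x (m y z).
Proof. rewrite (comm x y), <- H8, (comm z y). reflexivity. Qed.

Lemma lcomm x y z : m x (m y z) = m y (m x z).
Proof. rewrite <- assoc, (comm x y), assoc. reflexivity. Qed.
Lemma NE249 x0 x1 : x0 = (m (c (m x1 (c x0))) (c (m (c x0) (c x1)))).
Proof. intros; pose proof (comm (c x0) x1). pose proof (HJ x0 x1). congruence. Qed.
Lemma NE304 x0 x1 : x0 = (m (c (m x1 (c x0))) (c (m (c x1) (c x0)))).
Proof. intros; pose proof (comm (c x0) (c x1)). pose proof (NE249 x0 x1). congruence. Qed.
Lemma NE271 x0 x1 : x0 = (m (c (m (c x0) x1)) (c (m (c x1) (c x0)))).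
Proof. intros; pose proof (comm (c x0) (c x1)). pose proof (HJ x0 x1). congruence. Qed.
Lemma NE4999 x0 x1 x2 : (m (c (m (c x0) x1)) (m (c (m (c x0) (c x1))) x2)) = (m x0 x2).
Proof. intros; pose proof (HJ x0 x1). pose proof (assoc (c (m (c x0) x1)) (c (m (c x0) (c x1))) x2). congruence. Qed.
Lemma NE5433 x0 x1 : (m x0 (c (m (c (c x1)) (c x0)))) = (m x0 (c (m (c x0) x1))).
Proof. intros; pose proof (NE271 x0 (c x1)). pose proof (NE4999 x0 x1 (c (m (c (c x1)) (c x0)))). pose proof (comm (c (m (c x0) x1)) x0). congruence. Qed.
Lemma NE6062 x0 x1 x2 : (m (c (m (c x0) x1)) (m x2 (c (m (c x0) (c x1))))) = (m x2 x0).
Proof. intros; pose proof (HJ x0 x1). pose proof (lcomm x2 (c (m (c x0) x1)) (c (m (c x0) (c x1)))). congruence. Qed.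
Lemma NE105 x0 x1 x2 : (m x0 (m x1 x2)) = (m x0 (m x2 x1)).
Proof. intros; pose proof (comm x1 (m x0 x2)). pose proof (lcomm x1 x0 x2). pose proof (assoc x0 x2 x1). congruence. Qed.
Lemma NE142416 x0 x1 : (m x0 (c x1)) = (m x0 (m (c (m (c x0) x1)) (c (m (c (c x1)) x0)))).
Proof. intros; pose proof (NE5433 x0 x1). pose proof (NE6062 (c x1) x0 x0). pose proof (lcomm (c (m (c (c x1)) x0)) x0 (c (m (c x0) x1))). pose proof (NE105 x0 (c (m (c (c x1)) x0)) (c (m (c x0) x1))). congruence. Qed.
Lemma NE142872 x0 : (m (c x0) (c (c x0))) = (m x0 (c x0)).
Proof. intros; pose proof (NE304 x0 (c (c x0))). pose proof (NE142416 (c x0) (c x0)). pose proof (comm (c x0) x0). congruence. Qed.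
Lemma NE144531 x0 : (c x0) = (m (c (m x0 (c x0))) (c (m x0 (c (c x0))))).
Proof. intros; pose proof (NE142872 x0). pose proof (NE271 (c x0) x0). pose proof (comm (c (m (c (c x0)) x0)) (c (m x0 (c x0)))). pose proof (comm (c (c x0)) x0). congruence. Qed.
Lemma NE144785 x0 : x0 = (c (c x0)).
Proof. intros; pose proof (NE144531 (c x0)). pose proof (HJ x0 (c (c x0))). congruence. Qed.
Lemma G_nn sk_a : (c (c sk_a)) = sk_a.
Proof. intros; pose proof (NE144785 sk_a). congruence. Qed.
Lemma nn x : c (c x) = x. Proof. apply G_nn. Qed.
Lemma IE482 x0 x1 : (c x0) = (m (c (m x0 x1)) (c (m x0 (c x1)))).
Proof. intros; pose proof (nn x0). pose proof (HJ (c x0) x1). pose proof (nn x0). congruence. Qed.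
Lemma IE529 x0 x1 : (c x0) = (m (c (m x1 x0)) (c (m x0 (c x1)))).
Proof. intros; pose proof (comm x0 x1). pose proof (IE482 x0 x1). congruence. Qed.
Lemma IE5146 x0 x1 x2 : (m (c (m x0 x1)) (m (c (m x0 (c x1))) x2)) = (m (c x0) x2).
Proof. intros; pose proof (IE482 x0 x1). pose proof (assoc (c (m x0 x1)) (c (m x0 (c x1))) x2). congruence. Qed.
Lemma IE12655 x0 x1 : (m (c x0) (c (m (c x1) (c x0)))) = (m x1 (c (m x0 x1))).
Proof. intros; pose proof (IE529 (c x1) x0). pose proof (IE5146 x0 x1 (c (m (c x1) (c x0)))). pose proof (comm (c (m x0 x1)) (c (c x1))). pose proof (nn x1). congruence. Qed.
Lemma IE14412 x0 x1 : (m x0 (c (m (c x1) x0))) = (m x1 (c (m (c x0) x1))).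
Proof. intros; pose proof (nn x1). pose proof (IE12655 (c x1) x0). pose proof (nn x1). congruence. Qed.
Lemma IE576 x0 x1 : (c x0) = (m (c (m x0 x1)) (c (m (c x1) x0))).
Proof. intros; pose proof (comm x0 (c x1)). pose proof (IE482 x0 x1). congruence. Qed.
Lemma IE7600 x0 x1 x2 : (m (c (m x0 x1)) (m x2 (c (m (c x1) x0)))) = (m x2 (c x0)).
Proof. intros; pose proof (IE576 x0 x1). pose proof (lcomm x2 (c (m x0 x1)) (c (m (c x1) x0))). congruence. Qed.
Lemma IE632 x0 x1 : (c x0) = (m (c (m x1 x0)) (c (m (c x1) x0))).
Proof. intros; pose proof (comm x0 (c x1)). pose proof (IE529 x0 x1). congruence. Qed.
Lemma IE21301 x0 x1 : (m x0 (c x0)) = (m x1 (c x1)).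
Proof. intros; pose proof (IE14412 x0 x1). pose proof (IE7600 x0 x1 x0). pose proof (lcomm (c (m x0 x1)) x1 (c (m (c x0) x1))). pose proof (IE632 x1 x0). congruence. Qed.
Lemma IE23873 x0 x1 : (c x0) = (m (c (m x0 x0)) (c (m x1 (c x1)))).
Proof. intros; pose proof (IE21301 x0 x1). pose proof (IE482 x0 x0). congruence. Qed.
Lemma IE21580 x0 x1 x2 : (m x0 (m x1 (c (m x0 x1)))) = (m x2 (c x2)).
Proof. intros; pose proof (IE21301 (m x0 x1) x2). pose proof (assoc x0 x1 (c (m x0 x1))). congruence. Qed.
Lemma IE62 x0 x1 x2 : (m x0 (m x1 x2)) = (m x2 (m x0 x1)).
Proof. intros; pose proof (comm (m x0 x1) x2). pose proof (assoc x0 x1 x2). congruence. Qed.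
Lemma IE24128 x0 x1 : (m x0 (c x0)) = (m x1 (m x1 (c x1))).
Proof. intros; pose proof (IE23873 x1 (m x1 x1)). pose proof (IE21580 (m x1 x1) (c (m x1 x1)) x0). pose proof (comm (m x1 x1) (c x1)). pose proof (lcomm (c x1) x1 x1). pose proof (IE62 x1 (c x1) x1). congruence. Qed.
Lemma IE24451 x0 x1 x2 : (m x0 (c x0)) = (m x1 (m x2 (c x2))).
Proof. intros; pose proof (IE21301 x1 x2). pose proof (IE24128 x0 x1). congruence. Qed.
Lemma IE23264 x0 x1 x2 : (m x0 (m (c x0) x1)) = (m x1 (m x2 (c x2))).
Proof. intros; pose proof (IE21301 x0 x2). pose proof (IE62 x1 x0 (c x0)). pose proof (IE62 (c x0) x1 x0). congruence. Qed.
Lemma IE25287 x0 x1 x2 : (m x0 (m (c x0) x1)) = (m x2 (c x2)).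
Proof. intros; pose proof (IE24128 x2 x1). pose proof (IE23264 x0 x1 x1). congruence. Qed.
Lemma IE255 x0 x1 : x0 = (m (c (m x1 (c x0))) (c (m (c x0) (c x1)))).
Proof. intros; pose proof (comm (c x0) x1). pose proof (HJ x0 x1). congruence. Qed.
Lemma IE11402 x0 x1 : (m x0 x1) = (m x0 (c (m x0 (m (c x1) (c (m x0 x1)))))).
Proof. intros; pose proof (IE482 x0 x1). pose proof (IE255 (m x0 x1) (m x0 (c x1))). pose proof (comm (c (m (m x0 (c x1)) (c (m x0 x1)))) (c (c x0))). pose proof (nn x0). pose proof (assoc x0 (c x1) (c (m x0 x1))). congruence. Qed.
Lemma IE25840 x0 x1 : (m x0 x0) = (m x0 (c (m x1 (c x1)))).
Proof. intros; pose proof (IE25287 x0 (c (m x0 x0)) x1). pose proof (IE11402 x0 x0). congruence. Qed.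
Lemma IE41836 x0 x1 x2 : (m x0 x0) = (m x0 (c (m x1 (m x2 (c x2))))).
Proof. intros; pose proof (IE24451 x0 x1 x2). pose proof (IE25840 x0 x0). congruence. Qed.
Lemma IE5373 x0 x1 x2 : (m (c (m x0 x1)) (m x2 (c (m x0 (c x1))))) = (m x2 (c x0)).
Proof. intros; pose proof (IE482 x0 x1). pose proof (lcomm x2 (c (m x0 x1)) (c (m x0 (c x1)))). congruence. Qed.
Lemma IE40420 x0 x1 : (m x0 (c x1)) = (m (c (m x1 x1)) (m x0 x0)).
Proof. intros; pose proof (IE25840 x0 x1). pose proof (IE5373 x1 x1 x0). congruence. Qed.
Lemma IE48118 x0 x1 : (m x0 (m x0 (c (m x1 x1)))) = (m x0 (c x1)).
Proof. intros; pose proof (IE40420 x0 x1). pose proof (comm (c (m x1 x1)) (m x0 x0)). pose proof (assoc x0 x0 (c (m x1 x1))). congruence. Qed.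
Lemma IE49149 x0 x1 : (m x0 (c (m x1 (c x1)))) = (m x0 (m x0 x0)).
Proof. intros; pose proof (IE41836 x0 (m x1 (c x1)) x1). pose proof (IE48118 x0 (m x1 (c x1))). congruence. Qed.
Lemma IE49756 x0 : (m x0 x0) = (m x0 (m x0 x0)).
Proof. intros; pose proof (IE49149 x0 x0). pose proof (IE25840 x0 x0). congruence. Qed.
Lemma IE6815 x0 x1 x2 : (m (c (m x0 x1)) (m (c (m x1 (c x0))) x2)) = (m (c x1) x2).
Proof. intros; pose proof (IE529 x1 x0). pose proof (assoc (c (m x0 x1)) (c (m x1 (c x0))) x2). congruence. Qed.
Lemma IE10354 x0 x1 : (m (c x0) (c (m x1 (c x0)))) = (m (c x1) (c (m x0 (c x1)))).
Proof. intros; pose proof (IE6815 x0 x1 (c (m x0 (c x1)))). pose proof (IE5373 x0 x1 (c (m x1 (c x0)))). pose proof (comm (c (m x1 (c x0))) (c x0)). congruence. Qed.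
Lemma IE7275 x0 x1 x2 : (m (c (m x0 x1)) (m (c (m (c x1) x0)) x2)) = (m (c x0) x2).
Proof. intros; pose proof (IE576 x0 x1). pose proof (assoc (c (m x0 x1)) (c (m (c x1) x0)) x2). congruence. Qed.
Lemma IE7084 x0 x1 x2 : (m (c (m x0 x1)) (m x2 (c (m x1 (c x0))))) = (m x2 (c x1)).
Proof. intros; pose proof (IE529 x1 x0). pose proof (lcomm x2 (c (m x0 x1)) (c (m x1 (c x0)))). congruence. Qed.
Lemma IE10575 x0 x1 : (m (c x0) (c (m (c x0) x1))) = (m (c x1) (c (m x0 (c x1)))).
Proof. intros; pose proof (IE7275 x1 x0 (c (m x0 (c x1)))). pose proof (IE7084 x1 x0 (c (m (c x0) x1))). pose proof (comm (c (m (c x0) x1)) (c x0)). congruence. Qed.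
Lemma IE11134 x0 x1 : (m (c x0) (c (m x1 (c x0)))) = (m (c x0) (c (m (c x0) x1))).
Proof. intros; pose proof (IE10575 x0 x1). pose proof (IE10354 x1 x0). congruence. Qed.
Lemma IE13363 x0 x1 : (m (c x0) (c (m (c x1) (c x0)))) = (m x1 (c (m x1 x0))).
Proof. intros; pose proof (comm x0 x1). pose proof (IE12655 x0 x1). congruence. Qed.
Lemma IE13708 x0 x1 : (m x0 (c (m x1 x0))) = (m x0 (c (m x0 x1))).
Proof. intros; pose proof (IE13363 x1 x0). pose proof (IE12655 x1 x0). congruence. Qed.
Lemma IE16334 x0 x1 x2 : (m x0 (c (m x0 (m x1 x2)))) = (m x0 (c (m x1 (m x2 x0)))).
Proof. intros; pose proof (assoc x1 x2 x0). pose proof (IE13708 x0 (m x1 x2)). congruence. Qed.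
Lemma IE74562 x0 x1 x2 : (c x0) = (m (c (m x0 x0)) (c (m x1 (m x2 (c x2))))).
Proof. intros; pose proof (IE24451 x0 x1 x2). pose proof (IE482 x0 x0). congruence. Qed.
Lemma IE8460 x0 x1 x2 : (c x0) = (m (c (m x1 (m x2 x0))) (c (m (c (m x1 x2)) x0))).
Proof. intros; pose proof (IE62 x1 x2 x0). pose proof (IE576 x0 (m x1 x2)). congruence. Qed.
Lemma IE76272 x0 x1 : (c (m x0 (c x0))) = (c (m x1 (m x0 (c x0)))).
Proof. intros; pose proof (IE74562 (m x1 (m x0 (c x0))) (c (m (m x1 (m x0 (c x0))) x1)) x0). pose proof (IE8460 (m x0 (c x0)) (m x1 (m x0 (c x0))) x1). congruence. Qed.
Lemma IE221132 x0 : (c x0) = (m (c x0) (c x0)).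
Proof. intros; pose proof (IE49756 x0). pose proof (IE482 x0 (m x0 x0)). pose proof (IE10354 (m x0 x0) x0). pose proof (IE11134 x0 (m x0 x0)). pose proof (IE16334 (c x0) x0 x0). pose proof (IE76272 x0 x0). pose proof (IE25840 (c x0) x0). congruence. Qed.
Lemma IE221574 x0 : x0 = (m x0 x0).
Proof. intros; pose proof (nn x0). pose proof (IE221132 (c x0)). pose proof (nn x0). pose proof (nn x0). congruence. Qed.
Lemma G_idem sk_a : (m sk_a sk_a) = sk_a.
Proof. intros; pose proof (IE221574 sk_a). congruence. Qed.
Lemma idem x : m x x = x. Proof. apply G_idem. Qed.
Lemma TE79 x0 x1 : (m x0 (m x0 x1)) = (m x0 x1).
Proof. intros; pose proof (idem x0). pose proof (assoc x0 x0 x1). congruence. Qed.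
Lemma TE969 x0 x1 : (c x0) = (m (c (m x0 x1)) (c (m x0 (c x1)))).
Proof. intros; pose proof (nn x0). pose proof (HJ (c x0) x1). pose proof (nn x0). congruence. Qed.
Lemma TE6966 x0 x1 : (c x0) = (m (c (m x0 x1)) (c (m x0 (c (m x0 x1))))).
Proof. intros; pose proof (TE79 x0 x1). pose proof (TE969 x0 (m x0 x1)). congruence. Qed.
Lemma TE99 x0 x1 : (m x0 (m x1 x0)) = (m x1 x0).
Proof. intros; pose proof (idem x0). pose proof (lcomm x1 x0 x0). congruence. Qed.
Lemma TE7133 x0 x1 : (c x0) = (m (c (m x1 x0)) (c (m x0 (c (m x1 x0))))).
Proof. intros; pose proof (TE99 x0 x1). pose proof (TE969 x0 (m x1 x0)). congruence. Qed.
Lemma TE15877 x0 x1 : (m x0 x1) = (m x0 (c (m x0 (c (m x0 x1))))).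
Proof. intros; pose proof (TE6966 x0 x1). pose proof (TE7133 (c (m x0 x1)) x0). pose proof (nn (m x0 x1)). pose proof (comm (c (m x0 (c (m x0 x1)))) (c (c x0))). pose proof (nn x0). congruence. Qed.
Lemma TE9234 x0 x1 x2 : (m (c (m x0 x1)) (m x2 (c (m x0 (c x1))))) = (m x2 (c x0)).
Proof. intros; pose proof (TE969 x0 x1). pose proof (lcomm x2 (c (m x0 x1)) (c (m x0 (c x1)))). congruence. Qed.
Lemma TE16656 x0 x1 : (m x0 (c x0)) = (m x0 (m x1 (c (m x0 x1)))).
Proof. intros; pose proof (TE15877 x0 x1). pose proof (TE9234 x0 (m x0 x1) x0). pose proof (comm (c (m x0 (m x0 x1))) (m x0 x1)). pose proof (assoc x0 x1 (c (m x0 (m x0 x1)))). pose proof (TE79 x0 x1). congruence. Qed.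
Lemma TE16925 x0 x1 : (m x0 (c x0)) = (m x0 (m x1 (c (m x1 x0)))).
Proof. intros; pose proof (comm x0 x1). pose proof (TE16656 x0 x1). congruence. Qed.
Lemma TE17194 x0 x1 : (m x0 (c x0)) = (m x1 (c x1)).
Proof. intros; pose proof (TE16656 x1 x0). pose proof (lcomm x1 x0 (c (m x1 x0))). pose proof (TE16925 x0 x1). congruence. Qed.
Lemma TE275 x0 : x0 = (m x0 (c (m x0 (c x0)))).
Proof. intros; pose proof (idem (c x0)). pose proof (HJ x0 x0). pose proof (comm (c (m (c x0) x0)) (c (c x0))). pose proof (nn x0). pose proof (comm (c x0) x0). congruence. Qed.
Lemma TE17471 x0 x1 : x0 = (m x0 (c (m x1 (c x1)))).
Proof. intros; pose proof (TE17194 x0 x1). pose proof (TE275 x0). congruence. Qed.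
Lemma G_top sk_b sk_a : (m sk_b (c (m sk_a (c sk_a)))) = sk_b.
Proof. intros; pose proof (TE17471 sk_b sk_a). congruence. Qed.
Lemma topl b a : m b (c (m a (c a))) = b.
Proof. apply G_top. Qed.
Lemma zero x y : m x (c x) = m y (c y).
Proof.
  rewrite <- (nn (m x (c x))), <- (nn (m y (c y))). f_equal.
  rewrite <- (topl (c (m x (c x))) y), comm, topl. reflexivity.
Qed.
Lemma zabs x y : m (m x (c x)) y = m x (c x).
Proof.
  rewrite (zero x y), assoc, (comm (c y) y), <- assoc, idem. reflexivity.
Qed.
End Deriv.
Section Compl.
Variable A : algebra.
Notation X := (carrier A).
Notation m := (ameet A).
Notation c := (acomp A).
Hypothesis comm : forall x y, m x y = m y x.
Hypothesis assoc : forall x y z, m (m x y) z = m x (m y z).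
Hypothesis nn : forall x, c (c x) = x.
Hypothesis idem : forall x, m x x = x.
Hypothesis zero : forall x y, m x (c x) = m y (c y).
Hypothesis zabs : forall x y, m (m x (c x)) y = m x (c x).
Hypothesis HJ : forall x y, x = m (c (m (c x) y)) (c (m (c x) (c y))).
Variable e : X.
Definition z0 := m e (c e).
Definition one := c z0.

Lemma zeroE x : m x (c x) = z0.
Proof. apply zero. Qed.
Lemma zeroE' x : m (c x) x = z0.
Proof. rewrite comm; apply zero. Qed.
Lemma z0abs y : m z0 y = z0.
Proof. unfold z0; apply zabs. Qed.
Lemma z0abs' y : m y z0 = z0.
Proof. rewrite comm; apply z0abs. Qed.

Lemma one_r x : m x one = x.
Proof.
  pose proof (HJ x (c x)) as H. rewrite idem, nn, zeroE' in H. unfold one. now rewrite <- H.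
Qed.

Lemma splitting a b p : m a p = m b p -> m a (c p) = m b (c p) -> a = b.
Proof.
  intros H1 H2. rewrite <- (nn a), <- (nn b). f_equal.
  rewrite (HJ (c a) p), (HJ (c b) p), !nn, H1, H2. reflexivity.
Qed.

Definition lit (a : X) (bb : bool) := if bb then a else c a.

Fixpoint mint (v : nat -> X) (b : nat -> bool) (n : nat) : X :=
  match n with 0 => one | S k => m (lit (v k) (b k)) (mint v b k) end.

Lemma mint_lit v b n i : i < n -> m (mint v b n) (lit (v i) (b i)) = mint v b n.
Proof.
  induction n; intros Hi; [lia|]. simpl.
  destruct (Nat.eq_dec i n) as [->|Hne].
  - rewrite assoc, (comm (mint v b n)), <- assoc, idem. reflexivity.
  - rewrite assoc, IHn by lia. reflexivity.
Qed.

Lemma mint_litc v b n i : i < n -> m (mint v b n) (c (lit (v i) (b i))) = z0.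
Proof.
  induction n; intros Hi; [lia|]. simpl.
  destruct (Nat.eq_dec i n) as [->|Hne].
  - rewrite (comm (lit _ _)), assoc, zeroE. apply z0abs'.
  - rewrite assoc, IHn by lia. apply z0abs'.
Qed.

Fixpoint maxv (t : term) : nat :=
  match t with Var i => S i | Meet s u => Nat.max (maxv s) (maxv u) | Comp s => maxv s end.

Lemma key v b n t : maxv t <= n ->
  m (mint v b n) (eval A v t) = if eval two b t then mint v b n else z0.
Proof.
  revert n; induction t as [i|s IHs u IHu|s IHs]; intros n Hn; simpl in *.
  - destruct (b i) eqn:E.
    + pose proof (mint_lit v b n i ltac:(lia)) as H. rewrite E in H. exact H.
    + pose proof (mint_litc v b n i ltac:(lia)) as H. rewrite E in H. simpl in H. rewrite nn in H. exact H.
  - specialize (IHs n ltac:(lia)). specialize (IHu n ltac:(lia)).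
    rewrite <- assoc, IHs. destruct (eval two b s); simpl.
    + exact IHu.
    + apply z0abs.
  - specialize (IHs n Hn). destruct (eval two b s); simpl.
    + rewrite <- IHs, assoc, zeroE. apply z0abs'.
    + apply (splitting _ _ (eval A v s)).
      * rewrite assoc, zeroE', z0abs', IHs. reflexivity.
      * rewrite assoc, idem. reflexivity.
Qed.

Lemma mint_ext v b b' n : (forall i, i < n -> b i = b' i) -> mint v b n = mint v b' n.
Proof.
  induction n; intros H; simpl; [reflexivity|]. rewrite H by lia. f_equal. apply IHn. intros; apply H; lia.
Qed.

Lemma rearr M x p : m M (m x p) = m (m p M) x.
Proof. rewrite (comm x p), <- assoc, (comm M p). reflexivity. Qed.

Lemma Q v n : forall x y, (forall b, m (mint v b n) x = m (mint v b n) y) -> x = y.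
Proof.
  induction n; intros x y H.
  - specialize (H (fun _ => true)). simpl in H. rewrite !(comm one), !one_r in H. exact H.
  - apply (splitting _ _ (v n)).
    + apply IHn. intros b. set (b' := fun i => if Nat.eqb i n then true else b i).
      specialize (H b'). simpl in H.
      replace (b' n) with true in H by (unfold b'; now rewrite Nat.eqb_refl).
      rewrite (mint_ext v b' b n) in H by (intros i Hi; unfold b'; destruct (Nat.eqb_spec i n); [lia|reflexivity]).
      simpl in H. rewrite !rearr. exact H.
    + apply IHn. intros b. set (b' := fun i => if Nat.eqb i n then false else b i).
      specialize (H b'). simpl in H.
      replace (b' n) with false in H by (unfold b'; now rewrite Nat.eqb_refl).
      rewrite (mint_ext v b' b n) in H by (intros i Hi; unfold b'; destruct (Nat.eqb_spec i n); [lia|reflexivity]).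
      simpl in H. rewrite !rearr. exact H.
Qed.

Lemma complete s t : satisfies two (s, t) -> satisfies A (s, t).
Proof.
  intros H2 v. simpl. apply (Q v (Nat.max (maxv s) (maxv t))). intros b.
  rewrite !key by lia. pose proof (H2 b) as E; simpl in E; rewrite E. reflexivity.
Qed.
End Compl.

Definition asg {X : Type} (x y z : X) (n : nat) : X :=
  match n with 0 => x | 1 => y | _ => z end.

Lemma BA_of_axioms (A : algebra) :
  satisfies A A8 -> satisfies A J5' -> in_BA A.
Proof.
  intros S8 SJ.
  assert (H8 : forall x y z, ameet A x (ameet A y z) = ameet A (ameet A z x) y).
  { intros x y z. exact (S8 (asg x y z)). }
  assert (HJ : forall x y, x = ameet A (acomp A (ameet A (acomp A x) y))
                                   (acomp A (ameet A (acomp A x) (acomp A y)))).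
  { intros x y. exact (SJ (asg x y x)). }
  intros [s t] H2 v.
  exact (complete A (comm _ _ _ H8 HJ) (assoc _ _ _ H8 HJ) (nn _ _ _ H8 HJ) (idem _ _ _ H8 HJ)
           (zero _ _ _ H8 HJ) (zabs _ _ _ H8 HJ) HJ (v 0) s t H2 v).
Qed.

Definition projA : algebra := Algebra bool (fun a b => a) (fun a => a).
Definition andidA : algebra := Algebra bool andb (fun a => a).

Theorem theorem5p1 : length [A8; J5'] = 2 /\ is_base [A8; J5'] in_BA.
Proof.
  split; [reflexivity|]. split.
  - intro A. split.
    + intros Hall. apply BA_of_axioms.
      * apply Hall. left; reflexivity.
      * apply Hall. right; left; reflexivity.
    + intros HBA e He. apply HBA. destruct He as [<-|[<-|[]]]; intro v; simpl;
        destruct (v 0), (v 1), (v 2); reflexivity.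
  - intros i Hi Hcons. simpl in Hi.
    destruct i as [|[|i]]; [| |lia].
    + specialize (Hcons projA). simpl in Hcons.
      assert (Hs : satisfies projA A8).
      { apply Hcons. intros j Hj Hj0. destruct j as [|[|j]]; [lia| |lia].
        intro v; reflexivity. }
      specialize (Hs (asg true true false)). discriminate Hs.
    + specialize (Hcons andidA). simpl in Hcons.
      assert (Hs : satisfies andidA J5').
      { apply Hcons. intros j Hj Hj0. destruct j as [|[|j]]; [|lia|lia].
        intro v; simpl; destruct (v 0), (v 1), (v 2); reflexivity. }
      specialize (Hs (asg true false false)). discriminate Hs.
Qed.
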